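(* For $n\ge1$ let \[ \mathbf{M}_n=\begin{bmatrix} \frac{n}{2(2n+1)} & -\frac{3}{2n(2n+1)} & 0 & \frac{3}{2n^{5}}\\ 0 & \frac{n}{2(2n+1)} & -\frac{3}{2n(2n+1)} & \frac{3}{2n^{3}}\\ 0 & 0 & \frac{n}{2(2n+1)} & \frac{3}{2n}\\ 0 & 0 & 0 & 1 \end{bmatrix}. \] Then $\lim_{N\to\infty}\mathbf{M}_1\cdots\mathbf{M}_N$ exists and equals \[ \begin{bmatrix}0&0&0&\zeta(6)+\delta\\0&0&0&\zeta(4)\\0&0&0&\zeta(2)\\0&0&0&1\end{bmatrix},\qquad \delta=9\sum_{n\ge1}\frac{H_{n-1}^{(4)}}{\binom{2n}{n}n^{2}}\ (\approx 0.438668). \] In particular, since $\delta>0$, the identity asserting that this limit equals the matrix with last column $(\zeta(6),\zeta(4),\zeta(2),1)^t$ and all other entries zero is false.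
   Context: $\zeta$ denotes the Riemann zeta function. For integers $n\ge0$ and $p\ge1$, $H_n^{(p)}=\sum_{k=1}^{n}k^{-p}$ (so $H_0^{(p)}=0$). *)

(* Defs.v *)
From HB Require Import structures.
From mathcomp Require Import all_boot all_order all_algebra.
From mathcomp Require Import all_classical all_reals all_analysis.
Set Implicit Arguments. Unset Strict Implicit. Unset Printing Implicit Defensive.
Import Order.TTheory GRing.Theory Num.Theory.
Import numFieldNormedType.Exports.
Local Open Scope ring_scope.
Local Open Scope classical_set_scope.

Definition harm {R : realType} (n p : nat) : R :=
  \sum_(1 <= k < n.+1) (k%:R ^+ p)^-1.

Definition zeta {R : realType} (p : nat) : R :=
  limn (series (fun k : nat => ((k.+1)%:R ^+ p : R)^-1)).

(* term of delta for index n = k+1 : H_{n-1}^{(4)} / (binom(2n,n) n^2) *)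
Definition delta_term {R : realType} (k : nat) : R :=
  harm k 4 / ('C(k.+1.*2, k.+1)%:R * (k.+1)%:R ^+ 2).

Definition delta {R : realType} : R := 9 * limn (series (@delta_term R)).

Definition Mmat {R : realType} (n : nat) : 'M[R]_4 :=
  let x : R := n%:R in
  \matrix_(i < 4, j < 4)
    match nat_of_ord i, nat_of_ord j with
    | 0, 0 | 1, 1 | 2, 2 => x / (2 * (2 * x + 1))
    | 0, 1 | 1, 2 => - (3 / (2 * x * (2 * x + 1)))
    | 0, 3 => 3 / (2 * x ^+ 5)
    | 1, 3 => 3 / (2 * x ^+ 3)
    | 2, 3 => 3 / (2 * x)
    | 3, 3 => 1
    | _, _ => 0
    end.

Definition Mprod {R : realType} (N : nat) : 'M[R]_4 :=
  \prod_(1 <= n < N.+1) Mmat n.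

Definition Mlim {R : realType} : 'M[R]_4 :=
  \matrix_(i < 4, j < 4)
    if nat_of_ord j == 3%N then
      match nat_of_ord i with
      | 0 => zeta 6 + delta
      | 1 => zeta 4
      | 2 => zeta 2
      | _ => 1
      end
    else 0.

(* Main.v *)
Require Import Defs.
From HB Require Import structures.
From mathcomp Require Import all_boot all_order all_algebra.
From mathcomp Require Import all_classical all_reals all_analysis.
From mathcomp Require Import ring lra zify.
Import Order.TTheory GRing.Theory Num.Theory.
Import numFieldNormedType.Exports.
Local Open Scope ring_scope.
Local Open Scope classical_set_scope.
Set Implicit Arguments. Unset Strict Implicit. Unset Printing Implicit Defensive.
Section S. Variable R : realType.
Implicit Types (p q : {poly R}) (a b c : R).

Definition tri a b c : {poly R} := a%:P + b *: 'X + c *: 'X^2.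

Lemma coef_tri a b c i : (tri a b c)`_i =
  if i == 0%N then a else if i == 1%N then b else if i == 2%N then c else 0.
Proof.
rewrite /tri !coefD !coefZ coefC coefX coefXn.
by case: i => [|[|[|i]]] /=; rewrite ?mulr0 ?mulr1 ?addr0 ?add0r.
Qed.

Definition eqm p q := forall i, (i < 3)%N -> p`_i = q`_i.

Lemma eqm_refl p : eqm p p. Proof. by []. Qed.
Lemma eqm_sym p q : eqm p q -> eqm q p. Proof. by move=> H i /H ->. Qed.
Lemma eqm_trans p q r : eqm p q -> eqm q r -> eqm p r.
Proof. by move=> H1 H2 i Hi; rewrite H1 // H2. Qed.
Lemma eqmD p p' q q' : eqm p p' -> eqm q q' -> eqm (p + q) (p' + q').
Proof. by move=> H1 H2 i Hi; rewrite !coefD H1 // H2. Qed.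
Lemma eqmN p p' : eqm p p' -> eqm (- p) (- p').
Proof. by move=> H1 i Hi; rewrite !coefN H1. Qed.
Lemma eqmB p p' q q' : eqm p p' -> eqm q q' -> eqm (p - q) (p' - q').
Proof. by move=> H1 H2; apply: eqmD => //; apply: eqmN. Qed.
Lemma eqmM p p' q q' : eqm p p' -> eqm q q' -> eqm (p * q) (p' * q').
Proof.
move=> H1 H2 i Hi; rewrite !coefM; apply: eq_bigr => j _.
have Hj : (j < 3)%N by apply: leq_ltn_trans Hi; rewrite -ltnS.
rewrite H1 // H2 //; apply: leq_ltn_trans Hi; exact: leq_subr.
Qed.

Lemma eqm_tri p : eqm p (tri p`_0 p`_1 p`_2).
Proof. by move=> [|[|[|i]]] //= _; rewrite coef_tri. Qed.

Lemma triM a b c d e f :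
  eqm (tri a b c * tri d e f) (tri (a*d) (a*e+b*d) (a*f+b*e+c*d)).
Proof.
move=> i Hi; rewrite coefM coef_tri.
case: i Hi => [|[|[|i]]] //= _; rewrite !big_ord_recr big_ord0 /= !coef_tri /=; ring.
Qed.

Lemma triD a b c d e f : tri a b c + tri d e f = tri (a+d) (b+e) (c+f).
Proof. by apply/polyP => i; rewrite coefD !coef_tri; case: i => [|[|[|i]]] //=; rewrite addr0. Qed.

Lemma triN a b c : - tri a b c = tri (-a) (-b) (-c).
Proof. by apply/polyP => i; rewrite coefN !coef_tri; case: i => [|[|[|i]]] //=; rewrite oppr0. Qed.

Lemma triE a b c d e f : a = d -> b = e -> c = f -> tri a b c = tri d e f.
Proof. by move=> -> -> ->. Qed.

Lemma tri1 : (1 : {poly R}) = tri 1 0 0.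
Proof. by apply/polyP => i; rewrite coef1 coef_tri; case: i => [|[|[|i]]]. Qed.
Lemma triC a : a%:P = tri a 0 0.
Proof. by apply/polyP => i; rewrite coefC coef_tri; case: i => [|[|[|i]]]. Qed.

Lemma eqm_sum (I : Type) (r : seq I) (P : pred I) (F G : I -> {poly R}) :
  (forall i, P i -> eqm (F i) (G i)) ->
  eqm (\sum_(i <- r | P i) F i) (\sum_(i <- r | P i) G i).
Proof.
move=> H; elim/big_rec2: _ => [|i x y Pi Hxy]; first exact: eqm_refl.
exact: eqmD (H i Pi) Hxy.
Qed.

Lemma eqm_prod (I : Type) (r : seq I) (P : pred I) (F G : I -> {poly R}) :
  (forall i, P i -> eqm (F i) (G i)) ->
  eqm (\prod_(i <- r | P i) F i) (\prod_(i <- r | P i) G i).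
Proof.
move=> H; elim/big_rec2: _ => [|i x y Pi Hxy]; first exact: eqm_refl.
exact: eqmM (H i Pi) Hxy.
Qed.

Definition nu p : R := `|p`_0| + `|p`_1| + `|p`_2|.

Lemma nu_ge0 p : 0 <= nu p.
Proof. by rewrite /nu !addr_ge0. Qed.

Lemma nu_eqm p q : eqm p q -> nu p = nu q.
Proof. by move=> H; rewrite /nu !H. Qed.

Lemma nu_tri a b c : nu (tri a b c) = `|a| + `|b| + `|c|.
Proof. by rewrite /nu !coef_tri. Qed.

Lemma nuD p q : nu (p + q) <= nu p + nu q.
Proof.
rewrite /nu !coefD.
have := ler_normD p`_0 q`_0; have := ler_normD p`_1 q`_1; have := ler_normD p`_2 q`_2.
lra.
Qed.

Lemma nuN p : nu (- p) = nu p.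
Proof. by rewrite /nu !coefN !normrN. Qed.

Lemma coef_le_nu p i : (i < 3)%N -> `|p`_i| <= nu p.
Proof.
rewrite /nu; have := normr_ge0 p`_0; have := normr_ge0 p`_1; have := normr_ge0 p`_2.
case: i => [|[|[|i]]] //= *; lra.
Qed.

Lemma nuM p q : nu (p * q) <= nu p * nu q.
Proof.
rewrite (nu_eqm (eqmM (eqm_tri p) (eqm_tri q))) (nu_eqm (triM _ _ _ _ _ _)) nu_tri /nu.
set a := p`_0; set b := p`_1; set c := p`_2; set d := q`_0; set e := q`_1; set f := q`_2.
have h1 := ler_normD (a*e) (b*d).
have h2 := ler_normD (a*f + b*e) (c*d).
have h3 := ler_normD (a*f) (b*e).
rewrite !normrM in h1 h2 h3 *.
have := normr_ge0 a; have := normr_ge0 b; have := normr_ge0 c;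
have := normr_ge0 d; have := normr_ge0 e; have := normr_ge0 f.
move=> hf he hd hc hb ha.
have := mulr_ge0 hb hf; have := mulr_ge0 hc he; have := mulr_ge0 hc hf.
lra.
Qed.

Lemma nu1 : nu 1 = 1.
Proof. by rewrite tri1 nu_tri normr1 normr0 !addr0. Qed.

Lemma nu_sum (I : Type) (r : seq I) (P : pred I) (F : I -> {poly R}) :
  nu (\sum_(i <- r | P i) F i) <= \sum_(i <- r | P i) nu (F i).
Proof.
elim/big_rec2: _ => [|i x y Pi Hxy]; first by rewrite /nu !coef0 normr0 !addr0.
exact: le_trans (nuD _ _) (lerD (lexx _) Hxy).
Qed.

Lemma nu_prod (I : Type) (r : seq I) (P : pred I) (F : I -> {poly R}) :
  nu (\prod_(i <- r | P i) F i) <= \prod_(i <- r | P i) nu (F i).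
Proof.
elim/big_rec2: _ => [|i x y Pi Hxy]; first by rewrite nu1.
apply: le_trans (nuM _ _) _; apply: ler_wpM2l; first exact: nu_ge0.
exact: Hxy.
Qed.


Definition L c := tri c (-1) 0.
Definition U c := tri c^-1 (c^+2)^-1 (c^+3)^-1.
Definition sq (k : nat) : R := k%:R ^+ 2.

Lemma LU c : c != 0 -> eqm (L c * U c) 1.
Proof.
move=> c0; apply: eqm_trans (triM _ _ _ _ _ _) _; rewrite tri1.
by rewrite (triE (d:=1) (e:=0) (f:=0)) //; field.
Qed.

Lemma sq_neq0 k : (0 < k)%N -> sq k != 0.
Proof. by move=> k0; rewrite /sq expf_neq0 // pnatr_eq0 -lt0n. Qed.

Definition Pp n := \prod_(1 <= j < n.+1) L (sq j).
Definition Dinv n k := \prod_(0 <= j < n.+1) U (sq (k + j)).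
Definition Dp n k := \prod_(0 <= j < n.+1) L (sq (k + j)).
Definition Fk n k := (2 * n%:R + 1)%:P * Pp n * Dinv n k.
Definition gk n k : R := k%:R + (3 * n%:R - 2) / 2.
Definition Gk n k := (gk n k)%:P * Pp n.-1 * Dinv n.-1 k.
Definition al n := let x : R := n%:R in
  tri (x / (2 * (2 * x + 1))) (- (3 / (2 * x * (2 * x + 1))))
      (- (3 / (2 * x ^+ 3 * (2 * x + 1)))).

Lemma D1 n k : (0 < k)%N -> eqm (Dinv n k * Dp n k) 1.
Proof.
move=> k0; rewrite /Dinv /Dp -big_split /=.
apply: (@eqm_trans _ (\prod_(0 <= j < n.+1) (1:{poly R}))); last by rewrite big1.
apply: eqm_prod => j _; rewrite mulrC; apply: LU; apply: sq_neq0.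
by rewrite addn_gt0 k0.
Qed.

Lemma eqm_cancel X Y D Di : eqm (D * Di) 1 -> eqm (X * D) (Y * D) -> eqm X Y.
Proof.
move=> HD H.
have h1 := eqmM (eqm_refl X) HD; rewrite mulr1 mulrA in h1.
have h2 := eqmM (eqm_refl Y) HD; rewrite mulr1 mulrA in h2.
apply: eqm_trans (eqm_sym h1) _; apply: eqm_trans _ h2.
exact: eqmM H (eqm_refl Di).
Qed.

Lemma D2 n k : (0 < k)%N -> eqm (Dinv n k * Dp n.+1 k) (L (sq (k + n.+1))).
Proof.
move=> k0; rewrite [Dp n.+1 k]/Dp big_nat_recr //= -/(Dp n k) mulrA.
by apply: eqm_trans (eqmM (D1 n k0) (eqm_refl _)) _; rewrite mul1r.
Qed.

Lemma D3 n k : (0 < k)%N -> eqm (Dinv n k.+1 * Dp n.+1 k) (L (sq k)).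
Proof.
move=> k0; rewrite [Dp n.+1 k]/Dp big_ltn // addn0 big_add1 /=.
have -> : \prod_(0 <= i < n.+1) L (sq (k + i.+1)) = Dp n k.+1.
  by apply: eq_bigr => i _; rewrite addnS.
rewrite mulrCA mulrC.
by apply: eqm_trans (eqmM (D1 n (ltn0Sn k)) (eqm_refl _)) _; rewrite mul1r.
Qed.

Lemma WZcore n k : (0 < k)%N ->
  eqm ((2 * n%:R + 1)%:P * L (sq (k + n.+1)) - (2 * n.+1%:R + 1)%:P * al n.+1 * L (sq n.+1))
      ((gk n.+1 k)%:P * L (sq (k + n.+1)) - (gk n.+1 k.+1)%:P * L (sq k)).
Proof.
move=> k0.
have H1 := triM (2 * n%:R + 1) 0 0 (sq (k + n.+1)) (-1) 0.
have H2 := triM (2 * n.+1%:R + 1) 0 0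
   (n.+1%:R / (2 * (2 * n.+1%:R + 1))) (- (3 / (2 * n.+1%:R * (2 * n.+1%:R + 1))))
      (- (3 / (2 * n.+1%:R ^+ 3 * (2 * n.+1%:R + 1)))).
have H4 := triM (gk n.+1 k) 0 0 (sq (k + n.+1)) (-1) 0.
have H5 := triM (gk n.+1 k.+1) 0 0 (sq k) (-1) 0.
rewrite /L /al !triC.
apply: eqm_trans (eqmB H1 (eqmM H2 (eqm_refl _))) _.
apply: eqm_trans (eqmB (eqm_refl _) (triM _ _ _ _ _ _)) _.
apply: eqm_trans _ (eqm_sym (eqmB H4 H5)).
rewrite !triN !triD; apply: eqm_trans (eqm_refl _) _.
have hk : k%:R != 0 :> R by rewrite pnatr_eq0 -lt0n.
have hn : n.+1%:R != 0 :> R by rewrite pnatr_eq0.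
have hn2 : 2 * n.+1%:R + 1 != 0 :> R by rewrite gt_eqF // addr_gt0 ?mulr_gt0 ?ltr0n.
rewrite (triE (d := ((gk n.+1 k * sq (k + n.+1) + - (gk n.+1 k.+1 * sq k))))
   (e := (gk n.+1 k * -1 + 0 * sq (k + n.+1) + - (gk n.+1 k.+1 * -1 + 0 * sq k)))
   (f := (gk n.+1 k * 0 + 0 * -1 + 0 * sq (k + n.+1) + - (gk n.+1 k.+1 * 0 + 0 * -1 + 0 * sq k)))) //.
all: have hx : 0 <= n%:R :> R by exact: ler0n.
all: rewrite /gk /sq natrD -!natr1; field.
all: by rewrite ?andbT gt_eqF //; lra.
Qed.


Lemma eqm_eq p q : p = q -> eqm p q. Proof. by move=> ->. Qed.

Lemma WZ n k : (0 < k)%N ->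
  eqm (Fk n k - al n.+1 * Fk n.+1 k) (Gk n.+1 k - Gk n.+1 k.+1).
Proof.
move=> k0.
apply: (@eqm_cancel _ _ (Dp n.+1 k) (Dinv n.+1 k)).
  by rewrite mulrC; apply: D1.
have -> : (Fk n k - al n.+1 * Fk n.+1 k) * Dp n.+1 k =
   (2 * n%:R + 1)%:P * Pp n * (Dinv n k * Dp n.+1 k) -
   ((2 * n.+1%:R + 1)%:P * al n.+1 * L (sq n.+1)) * Pp n * (Dinv n.+1 k * Dp n.+1 k).
  by rewrite /Fk [Pp n.+1]/Pp big_nat_recr //= -/(Pp n); ring.
have -> : (Gk n.+1 k - Gk n.+1 k.+1) * Dp n.+1 k =
   (gk n.+1 k)%:P * Pp n * (Dinv n k * Dp n.+1 k) -
   (gk n.+1 k.+1)%:P * Pp n * (Dinv n k.+1 * Dp n.+1 k).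
  by rewrite /Gk /=; ring.
apply: eqm_trans (eqmB (eqmM (eqm_refl _) (D2 n k0)) (eqmM (eqm_refl _) (D1 n.+1 k0))) _.
apply: eqm_trans _ (eqm_sym (eqmB (eqmM (eqm_refl _) (D2 n k0)) (eqmM (eqm_refl _) (D3 n k0)))).
have H := eqmM (eqm_refl (Pp n)) (WZcore n k0).
by apply: eqm_trans (eqm_eq _) (eqm_trans H (eqm_eq _)); ring.
Qed.


Lemma eqm_sum_nat m n (F G : nat -> {poly R}) :
  (forall k, (m <= k < n)%N -> eqm (F k) (G k)) ->
  eqm (\sum_(m <= k < n) F k) (\sum_(m <= k < n) G k).
Proof.
move=> H; rewrite big_nat_cond [X in eqm _ X]big_nat_cond.
by apply: eqm_sum => k /andP[Hk _]; apply: H.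
Qed.

Lemma eqm_prod_nat m n (F G : nat -> {poly R}) :
  (forall k, (m <= k < n)%N -> eqm (F k) (G k)) ->
  eqm (\prod_(m <= k < n) F k) (\prod_(m <= k < n) G k).
Proof.
move=> H; rewrite big_nat_cond [X in eqm _ X]big_nat_cond.
by apply: eqm_prod => k /andP[Hk _]; apply: H.
Qed.

Definition Sk K n := \sum_(1 <= k < K.+1) Fk n k.

Definition beta n := let x : R := n%:R in
  tri (3 / (2 * x)) (3 / (2 * x ^+ 3)) (3 / (2 * x ^+ 5)).

Lemma SkWZ K n : eqm (Sk K n - al n.+1 * Sk K n.+1) (Gk n.+1 1 - Gk n.+1 K.+1).
Proof.
rewrite /Sk mulr_sumr -sumrB.
apply: eqm_trans (eqm_sum_nat (G := fun k => Gk n.+1 k - Gk n.+1 k.+1) _) _.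
  by move=> k /andP[k1 _]; apply: WZ.
rewrite sumrB -opprB -sumrB telescope_sumr // opprB.
exact: eqm_refl.
Qed.

Lemma G1 n : eqm (Gk n.+1 1) (beta n.+1).
Proof.
rewrite /Gk /= /Dinv.
have -> : \prod_(0 <= j < n.+1) U (sq (1 + j)) = \prod_(1 <= j < n.+1) U (sq j) * U (sq n.+1).
  by rewrite -big_nat_recr // big_add1 /=; apply: eq_bigr => j _; rewrite add1n.
have H : eqm (Pp n * \prod_(1 <= j < n.+1) U (sq j)) 1.
  rewrite /Pp -big_split /=.
  apply: (@eqm_trans _ (\prod_(1 <= j < n.+1) (1:{poly R}))); last by rewrite big1.
  apply: eqm_prod_nat => j /andP[j1 _]; apply: LU; exact: sq_neq0.
have -> : (gk n.+1 1)%:P * Pp n * (\prod_(1 <= j < n.+1) U (sq j) * U (sq n.+1)) =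
   (gk n.+1 1)%:P * (Pp n * \prod_(1 <= j < n.+1) U (sq j)) * U (sq n.+1) by ring.
apply: eqm_trans (eqmM (eqmM (eqm_refl _) H) (eqm_refl _)) _.
rewrite mulr1 /U triC.
apply: eqm_trans (triM _ _ _ _ _ _) _.
have hn : n.+1%:R != 0 :> R by rewrite pnatr_eq0.
rewrite /beta (triE (d := 3 / (2 * n.+1%:R)) (e := 3 / (2 * n.+1%:R ^+ 3)) (f := 3 / (2 * n.+1%:R ^+ 5))) //.
all: rewrite /gk /sq; field; by rewrite ?hn ?expf_neq0.
Qed.


Definition Q n := \prod_(1 <= m < n.+1) al m.

Lemma QS n : Q n.+1 = Q n * al n.+1.
Proof. by rewrite /Q big_nat_recr. Qed.
Lemma Q_0 : Q 0 = 1.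
Proof. by rewrite /Q big_geq. Qed.

Lemma main_sum K N : eqm (Sk K 0 - Q N * Sk K N)
  (\sum_(0 <= n < N) Q n * beta n.+1 - \sum_(0 <= n < N) Q n * Gk n.+1 K.+1).
Proof.
elim: N => [|N IH]; first by rewrite Q_0 mul1r subrr !big_geq // subrr.
have -> : Sk K 0 - Q N.+1 * Sk K N.+1 =
  (Sk K 0 - Q N * Sk K N) + Q N * (Sk K N - al N.+1 * Sk K N.+1) by rewrite QS; ring.
rewrite !big_nat_recr //=.
have -> : \sum_(0 <= i < N) Q i * beta i.+1 + Q N * beta N.+1 -
    (\sum_(0 <= i < N) Q i * Gk i.+1 K.+1 + Q N * Gk N.+1 K.+1) =
    (\sum_(0 <= i < N) Q i * beta i.+1 - \sum_(0 <= i < N) Q i * Gk i.+1 K.+1) +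
    Q N * (beta N.+1 - Gk N.+1 K.+1) by ring.
apply: eqmD IH (eqmM (eqm_refl _) _).
exact: eqm_trans (SkWZ K N) (eqmB (G1 N) (eqm_refl _)).
Qed.

Definition alp n := let x : R := n%:R in
  tri (x / (2 * (2 * x + 1))) (- (3 / (2 * x * (2 * x + 1)))) 0.
Definition Qp n := \prod_(1 <= m < n.+1) alp m.
Definition Em m := tri 1 0 (3 * harm m 4).

Lemma harmS m : harm m.+1 4 = harm m 4 + ((m.+1)%:R ^+ 4 : R)^-1.
Proof. by rewrite /harm big_nat_recr. Qed.

Lemma Ealp m : eqm (Em m * alp m.+1) (al m.+1 * Em m.+1).
Proof.
apply: eqm_trans (triM _ _ _ _ _ _) _.
apply: eqm_trans _ (eqm_sym (triM _ _ _ _ _ _)).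
rewrite harmS.
have hn : m.+1%:R != 0 :> R by rewrite pnatr_eq0.
have hx : 0 <= m%:R :> R by exact: ler0n.
apply: eqm_eq; apply: triE; rewrite -?natr1; field.
all: by rewrite ?andbT gt_eqF //; lra.
Qed.

Lemma QpE m : eqm (Qp m) (Q m * Em m).
Proof.
elim: m => [|m IH].
  by rewrite /Qp Q_0 /Em /harm !big_geq // mul1r mulr0 tri1; exact: eqm_refl.
rewrite /Qp big_nat_recr //= -/(Qp m) QS.
apply: eqm_trans (eqmM IH (eqm_refl _)) _.
rewrite -!mulrA; apply: eqmM (eqm_refl _) (Ealp m).
Qed.

Lemma bin_id m : (m.+1 * 'C(m.+1.*2, m.+1) = 2 * (m.*2).+1 * 'C(m.*2, m))%N.
Proof.
have e : 'C((m.*2).+1, m) = 'C((m.*2).+1, m.+1).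
  rewrite -bin_sub; last by rewrite -addnn; lia.
  by congr binomial; rewrite -addnn; lia.
have h1 : 'C(m.+1.*2, m.+1) = ('C((m.*2).+1, m.+1) * 2)%N.
  by rewrite doubleS binS e addnn muln2.
have h2 := mul_bin_diag (m.*2).+1 m; rewrite /= in h2.
rewrite h1; move: h2; set c1 := 'C(_, m.+1); set c0 := 'C(_, m); move=> h2.
rewrite -addnn in h2 *; nia.
Qed.


Lemma Q_coef0 n : (Q n)`_0 = 2 / ((n.+1)%:R * ('C(n.+1.*2, n.+1))%:R).
Proof.
elim: n => [|n IH].
  by rewrite Q_0 coef1 /= (_ : 'C(1.*2, 1) = 2%N) //; field.
move: (bin_id n.+1); set b1 := 'C(n.+2.*2, n.+2); set b0 := 'C(n.+1.*2, n.+1).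
rewrite -mul2n => /(congr1 (fun t : nat => t%:R : R)) hb.
rewrite !natrM -[((2 * n.+1).+1)%:R]natr1 natrM in hb.
have hb0 : b0%:R != 0 :> R by rewrite pnatr_eq0 -lt0n bin_gt0 -mul2n leq_pmull.
have hx : 0 <= n%:R :> R by exact: ler0n.
have hb1 : b1%:R = 2 * (2 * n.+1%:R + 1) * b0%:R / n.+2%:R :> R.
  by rewrite -hb; field; rewrite ?andbT gt_eqF //; lra.
rewrite QS coef0M IH coef_tri /= hb1 -!natr1; field.
move: hb0; rewrite -!natr1 => hb0.
by rewrite hb0 /= ?andbT; rewrite gt_eqF //; lra.
Qed.

Definition cN N := \sum_(0 <= n < N) Qp n * beta n.+1.

Lemma term_eq N : eqm (Qp N * beta N.+1) (Q N * beta N.+1 + tri 0 0 (9 * delta_term N)).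
Proof.
apply: eqm_trans (eqmM (QpE N) (eqm_refl _)) _.
have -> : Q N * Em N * beta N.+1 = (Q N * beta N.+1) * Em N by ring.
set W := Q N * beta N.+1.
apply: eqm_trans (eqmM (eqm_tri W) (eqm_refl _)) _.
apply: eqm_trans (triM _ _ _ _ _ _) _.
apply: eqm_trans _ (eqm_sym (eqmD (eqm_tri W) (eqm_refl _))).
rewrite triD; apply: eqm_eq; apply: triE; [ring|ring|].
have hC : ('C(N.+1.*2, N.+1))%:R != 0 :> R by rewrite pnatr_eq0 -lt0n bin_gt0 -mul2n leq_pmull.
have hN : N.+1%:R != 0 :> R by rewrite pnatr_eq0.
have hx : 0 <= N%:R :> R by exact: ler0n.
rewrite /W coef0M Q_coef0 /beta coef_tri /= /delta_term; field.
by rewrite hC andbT gt_eqF //; lra.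
Qed.

Lemma tri0 : tri 0 0 0 = 0.
Proof. by apply/polyP => i; rewrite coef_tri coef0; case: i => [|[|[|i]]]. Qed.

Lemma cN_eq N : eqm (cN N)
  (\sum_(0 <= n < N) Q n * beta n.+1 + tri 0 0 (9 * series delta_term N)).
Proof.
elim: N => [|N IH].
  by rewrite /cN /series /= !big_geq // mulr0 tri0 addr0; exact: eqm_refl.
rewrite /cN big_nat_recr //= -/(cN N) big_nat_recr //= seriesSr.
have -> : tri 0 0 (9 * (series delta_term N + delta_term N)) =
   tri 0 0 (9 * series delta_term N) + tri 0 0 (9 * delta_term N).
  by rewrite triD; apply: triE; ring.
have -> : \sum_(0 <= i < N) Q i * beta i.+1 + Q N * beta N.+1 +
   (tri 0 0 (9 * series delta_term N) + tri 0 0 (9 * delta_term N)) =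
   (\sum_(0 <= i < N) Q i * beta i.+1 + tri 0 0 (9 * series delta_term N)) +
   (Q N * beta N.+1 + tri 0 0 (9 * delta_term N)) by ring.
exact: eqmD IH (term_eq N).
Qed.


Lemma nuU c : 0 < c -> nu (U c) = c^-1 + (c^+2)^-1 + (c^+3)^-1.
Proof.
by move=> c0; rewrite /U nu_tri !ger0_norm // ltW // invr_gt0 // exprn_gt0.
Qed.

Lemma nuU_bound c : 4 <= c -> nu (U c) <= 21 / 16 * c^-1.
Proof.
move=> c4; have c0 : 0 < c by apply: lt_le_trans c4.
rewrite nuU // -!exprVn.
have v0 : 0 < c^-1 by rewrite invr_gt0.
have v4 : c^-1 <= 4^-1 by rewrite lef_pV2 ?posrE.
move: v0 v4; set v := c^-1 => v0 v4.
have h2 : v ^+ 2 <= v / 4 by rewrite expr2; nra.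
have h3 : v ^+ 3 <= v / 16 by rewrite exprS; nra.
lra.
Qed.

Lemma nuU_bound1 c : 1 <= c -> nu (U c) <= 3 * c^-1.
Proof.
move=> c1; have c0 : 0 < c by apply: lt_le_trans c1.
rewrite nuU // -!exprVn.
have v0 : 0 < c^-1 by rewrite invr_gt0.
have v1 : c^-1 <= 1 by rewrite invr_le1 // unitfE gt_eqF.
move: v0 v1; set v := c^-1 => v0 v1.
have h2 : v ^+ 2 <= v by rewrite expr2; nra.
have h3 : v ^+ 3 <= v by rewrite exprS; nra.
lra.
Qed.


Lemma alL m : (0 < m)%N -> eqm (al m * L (sq m))
  (tri (m%:R ^+ 3 / (2 * (2 * m%:R + 1))) (- (2 * m%:R / (2 * m%:R + 1))) 0).
Proof.
move=> m0; apply: eqm_trans (triM _ _ _ _ _ _) _.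
have hx : 1 <= m%:R :> R by rewrite ler1n.
apply: eqm_eq; apply: triE; rewrite /sq; field.
all: by rewrite ?andbT gt_eqF //; lra.
Qed.

Lemma factor_bound m k : (0 < m)%N -> (0 < k)%N ->
  nu (al m * L (sq m) * U (sq (k + m))) <= 1 / 2.
Proof.
move=> m0 k0.
have hx : 1 <= m%:R :> R by rewrite ler1n.
have hk : 1 <= k%:R :> R by rewrite ler1n.
apply: le_trans (nuM _ _) _.
have p1 : 0 <= m%:R ^+ 3 / (2 * (2 * m%:R + 1)) :> R.
  by apply: divr_ge0; [apply: exprn_ge0|]; lra.
have p2 : 0 <= 2 * m%:R / (2 * m%:R + 1) :> R by apply: divr_ge0; lra.
rewrite (nu_eqm (alL m0)) nu_tri normr0 addr0 normrN !ger0_norm //.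
set A := _ + _.
have A0 : 0 <= A by rewrite /A addr_ge0 // divr_ge0 // ?exprn_ge0; lra.
have c4 : 4 <= sq (k + m) by rewrite /sq natrD; nra.
apply: le_trans (ler_wpM2l A0 (nuU_bound c4)) _.
have hc : (sq (k + m))^-1 <= ((m%:R + 1) ^+ 2)^-1.
  rewrite lef_pV2 ?posrE /sq ?natrD; try nra.
have : A * (21 / 16 * ((m%:R + 1) ^+ 2)^-1) <= 1 / 2.
  have -> : A * (21 / 16 * ((m%:R + 1) ^+ 2)^-1) =
     (21 * (m%:R ^+ 3 + 4 * m%:R)) / (32 * (2 * m%:R + 1) * (m%:R + 1) ^+ 2).
    by rewrite /A; field; rewrite ?andbT gt_eqF //; lra.
  rewrite ler_pdivrMr; last by apply: mulr_gt0; nra.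
  nra.
move=> h; apply: le_trans _ h; nra.
Qed.


Lemma pair_eq n k : Q n * Pp n * Dinv n k =
  U (sq k) * \prod_(1 <= m < n.+1) (al m * L (sq m) * U (sq (k + m))).
Proof. by rewrite /Dinv big_ltn // addn0 !big_split /= /Q /Pp; ring. Qed.

Lemma core_bound n k : (0 < k)%N ->
  nu (Q n * Pp n * Dinv n k) <= 3 * (sq k)^-1 * (1 / 2) ^+ n.
Proof.
move=> k0; rewrite pair_eq; apply: le_trans (nuM _ _) _.
have hP : nu (\prod_(1 <= m < n.+1) (al m * L (sq m) * U (sq (k + m)))) <= (1 / 2) ^+ n.
  apply: le_trans (nu_prod _ _ _) _.
  apply: le_trans (_ : _ <= \prod_(1 <= m < n.+1) (1 / 2 : R)) _; last first.
    by rewrite prodr_const_nat subn1.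
  rewrite big_nat_cond [X in _ <= X]big_nat_cond; apply: ler_prod => m /andP[/andP[m1 _] _].
  by rewrite nu_ge0 factor_bound.
have hk : 1 <= sq k.
  have h : 1 <= k%:R :> R by rewrite ler1n.
  by rewrite /sq; nra.
apply: ler_pM; [exact: nu_ge0|exact: nu_ge0| exact: nuU_bound1 | exact: hP].
Qed.


Lemma sum_inv_sq K : \sum_(1 <= k < K.+1) (sq k)^-1 <= 2.
Proof.
suff H : forall K, \sum_(1 <= k < K.+2) (sq k)^-1 <= 2 - (K.+1%:R)^-1.
  case: K => [|K]; first by rewrite big_geq.
  apply: le_trans (H K) _; rewrite lerBlDr lerDl invr_ge0; exact: ler0n.
elim=> [|K1 IH].
  by rewrite big_nat1 /sq expr1n invr1; lra.
rewrite big_nat_recr //=; apply: le_trans (lerD IH (lexx _)) _.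
have e : K1.+2%:R = K1.+1%:R + 1 :> R by rewrite natr1.
rewrite /sq e; have hy : 1 <= K1.+1%:R :> R by rewrite ler1n.
move: hy; set y := K1.+1%:R => hy.
have -> : 2 - y^-1 + ((y + 1) ^+ 2)^-1 = 2 - (y + 1)^-1 - (y + 1)^-2 * y^-1.
  by field; rewrite ?andbT gt_eqF //; lra.
rewrite lerBlDr lerDl; apply: mulr_ge0; rewrite invr_ge0 ?exprn_ge0 //; lra.
Qed.

Lemma nuC c : nu c%:P = `|c|.
Proof. by rewrite triC nu_tri normr0 !addr0. Qed.

Lemma bound_QS K N : nu (Q N * Sk K N) <= 6 * (2 * N%:R + 1) * (1 / 2) ^+ N.
Proof.
have -> : Q N * Sk K N =
   \sum_(1 <= k < K.+1) (2 * N%:R + 1)%:P * (Q N * Pp N * Dinv N k).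
  by rewrite /Sk mulr_sumr; apply: eq_bigr => k _; rewrite /Fk; ring.
apply: le_trans (nu_sum _ _ _) _.
have hN : 0 <= 2 * N%:R + 1 :> R by rewrite addr_ge0 ?mulr_ge0 ?ler0n.
have h2 : 0 <= (1 / 2 : R) ^+ N by rewrite exprn_ge0 //; lra.
apply: le_trans (_ : _ <= \sum_(1 <= k < K.+1)
   (3 * (2 * N%:R + 1) * (1 / 2) ^+ N) * (sq k)^-1) _.
  rewrite big_nat_cond [X in _ <= X]big_nat_cond; apply: ler_sum => k /andP[/andP[k1 _] _].
  apply: le_trans (nuM _ _) _; rewrite nuC ger0_norm //.
  apply: le_trans (ler_wpM2l hN (core_bound N k1)) _.
  by rewrite le_eqVlt; apply/orP; left; apply/eqP; ring.
rewrite -mulr_sumr.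
have -> : 6 * (2 * N%:R + 1) * (1 / 2) ^+ N = (3 * (2 * N%:R + 1) * (1 / 2) ^+ N) * 2 :> R by ring.
by apply: ler_wpM2l; [rewrite !mulr_ge0 //| exact: sum_inv_sq].
Qed.

Definition CN N : R := \sum_(0 <= n < N) 3 * (1 + (3 * n.+1%:R - 2) / 2).

Lemma bound_QG K N : nu (\sum_(0 <= n < N) Q n * Gk n.+1 K.+1) <= CN N / K.+1%:R.
Proof.
apply: le_trans (nu_sum _ _ _) _.
rewrite /CN mulr_suml; apply: ler_sum => n _.
have -> : Q n * Gk n.+1 K.+1 = (gk n.+1 K.+1)%:P * (Q n * Pp n * Dinv n K.+1).
  by rewrite /Gk /=; ring.
apply: le_trans (nuM _ _) _; rewrite nuC.
have hx : 1 <= K.+1%:R :> R by rewrite ler1n.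
have hn : 0 <= n%:R :> R by exact: ler0n.
have hd : 0 <= (3 * n.+1%:R - 2) / 2 :> R by rewrite -natr1; apply: divr_ge0; lra.
have hg : 0 <= gk n.+1 K.+1 by rewrite /gk; apply: addr_ge0 => //; lra.
rewrite ger0_norm //.
apply: le_trans (ler_wpM2l hg (core_bound n (ltn0Sn K))) _.
have h2 : (1 / 2 : R) ^+ n <= 1 by rewrite exprn_ile1 //; lra.
have hs : 0 <= 3 * (sq K.+1)^-1 by rewrite mulr_ge0 // invr_ge0 /sq exprn_ge0.
apply: le_trans (_ : _ <= gk n.+1 K.+1 * (3 * (sq K.+1)^-1)) _.
  by have hp := mulr_ge0 hg hs; nra.
move: hd; rewrite /gk /sq; set d := (3 * n.+1%:R - 2) / 2; set x := K.+1%:R => hd.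
have -> : 3 * (1 + d) / x = (3 * ((1 + d) * x)) * (x ^+ 2)^-1.
  by field; rewrite ?andbT gt_eqF //; lra.
have -> : (x + d) * (3 * (x ^+ 2)^-1) = (3 * (x + d)) * (x ^+ 2)^-1 by ring.
by apply: ler_wpM2r; [rewrite invr_ge0 exprn_ge0 //; lra | nra].
Qed.


Lemma coef_bound i N K : (i < 3)%N ->
  `|(cN N)`_i - ((Sk K 0)`_i + (tri 0 0 (9 * series delta_term N))`_i)| <=
   6 * (2 * N%:R + 1) * (1 / 2) ^+ N + CN N / K.+1%:R.
Proof.
move=> Hi.
have e1 := cN_eq N Hi; have e2 := main_sum K N Hi.
rewrite !coefB in e2; rewrite e1 coefD.
have h1 := coef_le_nu (Q N * Sk K N) Hi.
have h2 := coef_le_nu (\sum_(0 <= n < N) Q n * Gk n.+1 K.+1) Hi.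
have b1 := bound_QS K N; have b2 := bound_QG K N.
have := ler_normD ((\sum_(0 <= n < N) Q n * Gk n.+1 K.+1)`_i) (- (Q N * Sk K N)`_i).
rewrite normrN => h3.
have -> : (\sum_(0 <= n < N) Q n * beta n.+1)`_i + (tri 0 0 (9 * series delta_term N))`_i -
   ((Sk K 0)`_i + (tri 0 0 (9 * series delta_term N))`_i) =
   (\sum_(0 <= n < N) Q n * Gk n.+1 K.+1)`_i - (Q N * Sk K N)`_i by lra.
apply: le_trans h3 _; rewrite [in X in _ <= X]addrC.
by apply: lerD; [apply: le_trans h2 b2 | apply: le_trans h1 b1].
Qed.

Lemma Sk0_coef K i : (i < 3)%N ->
  (Sk K 0)`_i = series (fun k => ((k.+1)%:R ^+ (2 * i.+1))^-1 : R) K.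
Proof.
move=> Hi; rewrite /Sk coef_sum seriesEnat /= big_add1 /=.
apply: eq_bigr => k _.
rewrite /Fk /Pp /Dinv big_geq // big_nat1 addn0 mulr0 add0r polyC1 !mul1r.
rewrite /U coef_tri /sq.
by case: i Hi => [|[|[|i]]] //= _; rewrite -exprM.
Qed.


Definition Mform N : 'M[R]_4 := \matrix_(i < 4, j < 4)
  if nat_of_ord i == 3%N then (if nat_of_ord j == 3%N then 1 else 0)
  else if nat_of_ord j == 3%N then (cN N)`_(2 - i)
  else if (i <= j)%N then (Qp N)`_(j - i) else 0.

Lemma MprodE N : Mprod N = Mform N.
Proof.
elim: N => [|N IH].
  rewrite /Mprod big_geq //; apply/matrixP => i j; rewrite !mxE /cN /Qp !big_geq // coef0.
  by case: i j => [[|[|[|[|i]]]] Hi] [[|[|[|[|j]]]] Hj] //=; rewrite ?coef1.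
rewrite /Mprod big_nat_recr //= -/(Mprod N) IH; apply/matrixP => i j.
have QpS : Qp N.+1 = Qp N * alp N.+1 by rewrite /Qp big_nat_recr.
have cNS : cN N.+1 = cN N + Qp N * beta N.+1 by rewrite /cN big_nat_recr.
rewrite -mulmxE mxE !big_ord_recl big_ord0 !mxE /bump /= QpS cNS.
case: i j => [[|[|[|[|i]]]] Hi] [[|[|[|[|j]]]] Hj] //=.
all: rewrite ?coefD ?coefM ?coef0 ?big_ord_recr ?big_ord0 /= ?coef_tri /=.
all: ring.
Qed.


Lemma inv_pow_le (e : nat) k : (2 <= e)%N -> ((k.+1)%:R ^+ e)^-1 <= (sq k.+1)^-1 :> R.
Proof.
move=> p2; have h1 : 1 <= k.+1%:R :> R by rewrite ler1n.
rewrite lef_pV2 ?posrE /sq ?exprn_gt0 ?(lt_le_trans ltr01) //.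
exact: ler_weXn2l.
Qed.

Lemma series_inv_cvg (e : nat) : (2 <= e)%N ->
  cvgn (series (fun k => ((k.+1)%:R ^+ e)^-1 : R)).
Proof.
move=> p2; apply: nondecreasing_is_cvgn.
  rewrite seriesEnat; apply: nondecreasing_series => n _ _.
  by rewrite invr_ge0 exprn_ge0.
exists 2 => _ [n _ <-]; rewrite seriesEnat /=.
apply: le_trans (_ : _ <= \sum_(0 <= k < n) (sq k.+1)^-1) _.
  by apply: ler_sum => k _; exact: inv_pow_le.
have := sum_inv_sq n; rewrite big_add1 /=.
by [].
Qed.

Lemma harm_le2 k : harm k 4 <= 2 :> R.
Proof.
apply: le_trans (sum_inv_sq k); rewrite /harm big_nat_cond [X in _ <= X]big_nat_cond.
apply: ler_sum => j /andP[/andP[j1 _] _].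
case: j j1 => // j _; exact: inv_pow_le.
Qed.

Lemma harm_ge0 k : 0 <= harm k 4 :> R.
Proof. by rewrite /harm sumr_ge0 // => j _; rewrite invr_ge0 exprn_ge0. Qed.

Lemma dt_ge0 k : 0 <= delta_term k :> R.
Proof. by rewrite /delta_term divr_ge0 ?harm_ge0 // mulr_ge0 // exprn_ge0. Qed.

Lemma dt_le k : delta_term k <= 2 * (sq k.+1)^-1 :> R.
Proof.
rewrite /delta_term.
have hC : 1 <= ('C(k.+1.*2, k.+1))%:R :> R by rewrite ler1n bin_gt0 -mul2n leq_pmull.
have hs : 1 <= sq k.+1.
  have h : 1 <= k.+1%:R :> R by rewrite ler1n.
  by rewrite /sq; nra.
have h2 := harm_le2 k; have h0 := harm_ge0 k.
rewrite ler_pdivrMr; last by apply: mulr_gt0; [lra | rewrite -/(sq k.+1); lra].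
rewrite -/(sq k.+1).
have -> : 2 * (sq k.+1)^-1 * ('C(k.+1.*2, k.+1)%:R * sq k.+1) = 2 * ('C(k.+1.*2, k.+1))%:R.
  by field; rewrite gt_eqF //; lra.
nra.
Qed.

Lemma cvg_delta : cvgn (series (@delta_term R)).
Proof.
apply: nondecreasing_is_cvgn.
  by rewrite seriesEnat; apply: nondecreasing_series => n _ _; exact: dt_ge0.
exists 4 => _ [n _ <-]; rewrite seriesEnat /=.
apply: le_trans (_ : _ <= \sum_(0 <= k < n) 2 * (sq k.+1)^-1) _.
  by apply: ler_sum => k _; exact: dt_le.
rewrite -mulr_sumr.
have := sum_inv_sq n; rewrite big_add1 /= => h.
lra.
Qed.


Lemma K_limit (c t b C zl : R) (s : R^nat) : s @ \oo --> zl ->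
  (forall K, `|c - (s K + t)| <= b + C / K.+1%:R) -> `|c - (zl + t)| <= b.
Proof.
move=> hs H.
have hf : (fun K => `|c - (s K + t)| - C * harmonic K) @ \oo --> `|c - (zl + t)| - C * 0.
  apply: cvgB.
    apply: cvg_norm; apply: cvgB; first exact: cvg_cst.
    by apply: cvgD => //; exact: cvg_cst.
  by apply: cvgMl_tmp; exact: cvg_harmonic.
rewrite mulr0 subr0 in hf.
apply: (ler_cvg_to hf (cvg_cst b)); apply: nearW => K /=.
by rewrite lerBlDr; exact: H K.
Qed.

Lemma lin_exp N : 2 * N%:R + 1 <= 3 * (3 / 2) ^+ N :> R.
Proof.
have H : forall M, 2 * M%:R + 5 <= 3 * (3 / 2) ^+ M.+2 :> R.
  clear N; elim=> [|N IH]; first by rewrite expr2; lra.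
  have hx : 0 <= N%:R :> R by exact: ler0n.
  have -> : N.+1%:R = N%:R + 1 :> R by rewrite natr1.
  by rewrite exprS; lra.
case: N => [|[|N]]; rewrite ?expr0 ?expr1; try lra.
have := H N; rewrite -addn2 natrD; lra.
Qed.

Lemma b_cvg : (fun N => 6 * (2 * N%:R + 1) * (1 / 2) ^+ N : R) @ \oo --> 0.
Proof.
have hg : geometric 18 (3 / 4 : R) @ \oo --> 0.
  by apply: cvg_geometric; rewrite ger0_norm; lra.
have H1 : \forall N \near \oo, (cst 0 : R^nat) N <=
     6 * (2 * N%:R + 1) * (1 / 2) ^+ N <= geometric 18 (3 / 4 : R) N.
  apply: nearW => N /=; apply/andP; split.
    have hN : 0 <= N%:R :> R by exact: ler0n.
    by apply: mulr_ge0; [apply: mulr_ge0; lra | apply: exprn_ge0; lra].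
  have h := lin_exp N.
  have e : (3 / 4 : R) ^+ N = (3 / 2) ^+ N * (1 / 2) ^+ N.
    by rewrite -exprMn; congr (_ ^+ _); lra.
  rewrite e.
  have hp : 0 <= (1 / 2 : R) ^+ N by rewrite exprn_ge0 //; lra.
  nra.
exact: (squeeze_cvgr H1 (cvg_cst 0) hg).
Qed.

Lemma entry_cvg (u T b : R^nat) (Lm : R) : T @ \oo --> Lm -> b @ \oo --> 0 ->
  (forall N, `|u N - T N| <= b N) -> u @ \oo --> Lm.
Proof.
move=> hT hb H.
have h0 : (fun N => u N - T N) @ \oo --> 0.
  apply/norm_cvg0P.
  apply: (@squeeze_cvgr _ _ _ _ (cst 0) b) => //; last exact: cvg_cst.
  by apply: nearW => N /=; rewrite normr_ge0 H.
have -> : u = (fun N => (u N - T N) + T N) by apply: funext => N; rewrite subrK.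
by rewrite -[Lm]add0r; apply: cvgD.
Qed.

Lemma mx_cvg (G : nat -> 'M[R]_4) (M : 'M[R]_4) :
  (forall i j, (fun N => G N i j) @ \oo --> M i j) -> G @ \oo --> M.
Proof.
move=> H; apply/cvg_mx_entourageP => A entA.
suff : \forall n \near \oo, forall i j, (M i j, G n i j) \in A by [].
apply: filter_forall => i; apply: filter_forall => j.
have := (@cvg_app_entourageP _ _ (fun N => G N i j) \oo _ (M i j)).1 (H i j) A entA.
move=> hA; near=> N; rewrite inE; near: N; exact: hA.
Unshelve. all: by end_near.
Qed.


Lemma coef_cvg ii : (ii < 3)%N ->
  (fun N => (cN N)`_ii) @ \oo --> zeta (2 * ii.+1) + (if ii == 2%N then delta else 0).
Proof.
move=> Hii.
have hs : (fun K => (Sk K 0)`_ii) @ \oo --> zeta (2 * ii.+1).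
  have -> : (fun K => (Sk K 0)`_ii) =
      series (fun k => ((k.+1)%:R ^+ (2 * ii.+1))^-1 : R).
    by apply: funext => K; exact: Sk0_coef.
  by apply: series_inv_cvg; rewrite mulnS.
apply: (@entry_cvg _
   (fun N => zeta (2 * ii.+1) + (tri 0 0 (9 * series delta_term N))`_ii)
   (fun N => 6 * (2 * N%:R + 1) * (1 / 2) ^+ N)).
- apply: cvgD; first exact: cvg_cst.
  rewrite /delta; case: ii Hii hs => [|[|[|ii]]] // _ _ /=.
  + under eq_fun do rewrite coef_tri /=. exact: cvg_cst.
  + under eq_fun do rewrite coef_tri /=. exact: cvg_cst.
  + under eq_fun do rewrite coef_tri /=. apply: cvgMl_tmp; exact: cvg_delta.
- exact: b_cvg.
- move=> N; apply: (K_limit hs) => K; exact: coef_bound.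
Qed.

Lemma nu_alp m : (0 < m)%N -> nu (alp m) <= 2 / 3.
Proof.
move=> m0; have hx : 1 <= m%:R :> R by rewrite ler1n.
have p1 : 0 <= m%:R / (2 * (2 * m%:R + 1)) :> R by apply: divr_ge0; lra.
have p2 : 0 <= 3 / (2 * m%:R * (2 * m%:R + 1)) :> R.
  by apply: divr_ge0; [lra | apply: mulr_ge0; lra].
rewrite /alp nu_tri normr0 addr0 normrN !ger0_norm //.
have -> : m%:R / (2 * (2 * m%:R + 1)) + 3 / (2 * m%:R * (2 * m%:R + 1)) =
   (m%:R ^+ 2 + 3) / (2 * m%:R * (2 * m%:R + 1)) :> R.
  by field; rewrite ?andbT gt_eqF //; lra.
rewrite ler_pdivrMr; last by apply: mulr_gt0; nra.
nra.
Qed.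

Lemma Qp_cvg m : (m < 3)%N -> (fun N => (Qp N)`_m) @ \oo --> 0.
Proof.
move=> Hm; apply: (@entry_cvg _ (cst 0) (geometric 1 (2 / 3))).
- exact: cvg_cst.
- by apply: cvg_geometric; rewrite ger0_norm; lra.
move=> N /=; rewrite subr0 mul1r.
apply: le_trans (coef_le_nu _ Hm) _.
apply: le_trans (nu_prod _ _ _) _.
apply: le_trans (_ : _ <= \prod_(1 <= k < N.+1) (2 / 3 : R)) _; last first.
  by rewrite prodr_const_nat subn1.
rewrite big_nat_cond [X in _ <= X]big_nat_cond; apply: ler_prod => k /andP[/andP[k1 _] _].
by rewrite nu_ge0 nu_alp.
Qed.

Lemma delta_gt0 : 0 < (@delta R).
Proof.
rewrite /delta mulr_gt0 //.
have hnd : nondecreasing_seq (series (@delta_term R)).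
  by rewrite seriesEnat; apply: nondecreasing_series => n _ _; exact: dt_ge0.
apply: lt_le_trans (nondecreasing_cvgn_le hnd cvg_delta 2).
rewrite seriesEnat /= big_nat_recr //= big_nat1 -/(series _ _).
have h0 := dt_ge0 0.
suff : 0 < delta_term 1 :> R by lra.
rewrite /delta_term divr_gt0 //.
  by rewrite /harm big_nat1 expr1n invr1 ltr01.
by rewrite mulr_gt0 // ?ltr0n ?bin_gt0 // exprn_gt0.
Qed.


Lemma main_aux : cvgn (series (@delta_term R)) /\
  (@Mprod R) @ \oo --> (@Mlim R) /\ 0 < (@delta R).
Proof.
split; first exact: cvg_delta.
split; last exact: delta_gt0.
apply: mx_cvg => i j.
have -> : (fun N => Mprod N i j) = (fun N =>
   if nat_of_ord i == 3%N then (if nat_of_ord j == 3%N then 1 else 0)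
   else if nat_of_ord j == 3%N then (cN N)`_(2 - i)
   else if (i <= j)%N then (Qp N)`_(j - i) else 0).
  by apply: funext => N; rewrite MprodE mxE.
rewrite /Mlim mxE.
case: i j => [[|[|[|[|i]]]] Hi] [[|[|[|[|j]]]] Hj] //=; try exact: cvg_cst.
all: try (apply: Qp_cvg; done).
- exact: (coef_cvg (ii := 2%N)).
- by rewrite -[zeta 4]addr0; exact: (coef_cvg (ii := 1%N)).
- by rewrite -[zeta 2]addr0; exact: (coef_cvg (ii := 0%N)).
Qed.

End S.

Unset Implicit Arguments.
Theorem mainTheorem5 (R : realType) :
  cvgn (series (@delta_term R)) /\
  (@Mprod R) @ \oo --> (@Mlim R) /\
  0 < (@delta R).
Proof. exact: main_aux. Qed.
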